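(* Let $G$ be a finite group. Then the non-inverse graph $\Gamma_{NI}(G)$ is minimally connected if and only if either every non-identity element of $G$ is self-inverse, or no non-identity element of $G$ is self-inverse.
   Context: The non-inverse graph $\Gamma_{NI}(G)$ of a group $G$ is the simple undirected graph with vertex set $G$ in which two distinct elements $x,y$ are adjacent if and only if $y\neq x^{-1}$. An element $x$ is self-inverse if $x=x^{-1}$. For a connected graph $\Gamma$, a vertex cut-set is a set $S$ of vertices such that $\Gamma-S$ is disconnected or has just one vertex, and the vertex connectivity $\kappa(\Gamma)$ is the smallest size of a vertex cut-set. $\Gamma$ is minimally connected if $\kappa(\Gamma-\epsilon)=\kappa(\Gamma)-1$ for every edge $\epsilon$ of $\Gamma$. *)

(* Defs.v *)
From mathcomp Require Import all_boot all_fingroup.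
Set Implicit Arguments. Unset Strict Implicit. Unset Printing Implicit Defensive.

(* A simple graph on a finite type T is a symmetric irreflexive relation e. *)

Definition induced_rel (T : finType) (e : rel T) (S : {set T}) : rel T :=
  fun u v => [&& e u v, u \notin S & v \notin S].

Definition vertex_cut (T : finType) (e : rel T) (S : {set T}) : bool :=
  (#|~: S| == 1) ||
  [exists u, exists v,
     [&& u \notin S, v \notin S & ~~ connect (induced_rel e S) u v]].

(* Vertex connectivity: minimal size of a vertex cut-set.  (The default #|T|
   is never reached when T is nonempty, since removing all but one vertex
   gives a cut-set of size #|T| - 1.) *)
Definition kappa (T : finType) (e : rel T) : nat :=
  \big[minn/#|T|]_(S : {set T} | vertex_cut e S) #|S|.

Definition graph_connected (T : finType) (e : rel T) : Prop :=
  forall u v : T, connect e u v.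

Definition delete_edge (T : finType) (e : rel T) (x y : T) : rel T :=
  fun u v => e u v && ~~ (((u == x) && (v == y)) || ((u == y) && (v == x))).

Definition minimally_connected (T : finType) (e : rel T) : Prop :=
  graph_connected e /\
  forall x y : T, e x y -> (kappa (delete_edge e x y)).+1 = kappa e.

Definition non_inverse_rel (gT : finGroupType) : rel gT :=
  fun x y => (x != y) && (y != x^-1)%g.

(* Main.v *)
Require Import Defs.
From mathcomp Require Import all_boot all_fingroup.
Set Implicit Arguments. Unset Strict Implicit. Unset Printing Implicit Defensive.

Lemma bigmin_le (I : finType) (P : pred I) (F : I -> nat) x i0 :
  P i0 -> \big[minn/x]_(i | P i) F i <= F i0.
Proof.
move=> Pi; have: i0 \in index_enum I by rewrite mem_index_enum.
elim: (index_enum I) => [//|j s IH]; rewrite in_cons big_cons.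
case/orP => [/eqP<-|/IH h]; first by rewrite Pi geq_minl.
by case: (P j) => //; exact: leq_trans (geq_minr _ _) h.
Qed.

Lemma kappa_le (T : finType) (e : rel T) S : vertex_cut e S -> kappa e <= #|S|.
Proof. move=> h; rewrite /kappa; exact: (@bigmin_le _ (vertex_cut e) (fun S : {set T} => #|S|) #|T| S h). Qed.

Lemma kappa_ge (T : finType) (e : rel T) m :
  m <= #|T| -> (forall S, vertex_cut e S -> m <= #|S|) -> m <= kappa e.
Proof.
move=> hT hS; rewrite /kappa; apply: (big_ind (fun k => m <= k)) => //.
by move=> a b ha hb; rewrite leq_min ha hb.
Qed.

Definition nadj (T : finType) (e : rel T) p := [set q | (q != p) && ~~ e p q].

Lemma no_connect (T : finType) (r : rel T) x y :
  (forall z, ~~ r x z) -> x != y -> ~~ connect r x y.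
Proof.
move=> hx xy; apply/negP => /connectP [[|z p]] /=; first by move=> _ /eqP; rewrite eq_sym (negbTE xy).
by case/andP => h; rewrite (negbTE (hx z)) in h.
Qed.

Lemma cut_split (T : finType) (e : rel T) (S : {set T}) : symmetric e ->
  vertex_cut e S -> #|~:S| != 1 ->
  exists A B : {set T}, [/\ #|~:S| = #|A| + #|B|, A != set0, B != set0 &
     forall a b, a \in A -> b \in B -> (b \in nadj e a) && (a \in nadj e b)].
Proof.
move=> esym /orP [/eqP->//| /existsP [u /existsP [v /and3P [uS vS nc]]]] _.
set r := induced_rel e S.
set C := [set w | connect r u w].
exists (~:S :&: C), (~:S :\: C); split.
- by rewrite cardsID.
- by apply/set0Pn; exists u; rewrite !inE uS connect0.
- by apply/set0Pn; exists v; rewrite !inE vS nc.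
move=> a b; rewrite !inE => /andP [aS ca] /andP [nbC bS].
have nab : ~~ e a b.
  apply/negP => eab; move: nbC; rewrite (connect_trans ca) //.
  by apply: connect1; rewrite /r /induced_rel eab aS bS.
have ba : b != a by apply/eqP => eba; move: nbC; rewrite eba ca.
by rewrite ba nab eq_sym ba esym nab.
Qed.

Lemma cut_size (T : finType) (e : rel T) d S : symmetric e ->
  (forall p, #|nadj e p| <= d) -> vertex_cut e S -> #|~:S| <= maxn 1 (d + d).
Proof.
move=> es hd cS; case: (eqVneq #|~:S| 1) => [->|n1]; first by rewrite leq_maxl.
have [A [B [-> /set0Pn [a0 aA] /set0Pn [b0 bB] hAB]]] := cut_split es cS n1.
apply: leq_trans (leq_maxr _ _); apply: leq_add.
  apply: leq_trans (hd b0); apply: subset_leq_card; apply/subsetP => a aA'.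
  by case/andP: (hAB a b0 aA' bB).
apply: leq_trans (hd a0); apply: subset_leq_card; apply/subsetP => b bB'.
by case/andP: (hAB a0 b aA bB').
Qed.

Lemma card_compl (T : finType) (S : {set T}) : #|S| = #|T| - #|~:S|.
Proof. by rewrite -(cardsC S) addnK. Qed.

Lemma kappa_lb (T : finType) (e : rel T) d : symmetric e ->
  (forall p, #|nadj e p| <= d) -> #|T| - maxn 1 (d + d) <= kappa e.
Proof.
move=> es hd; apply: kappa_ge; first exact: leq_subr.
by move=> S cS; rewrite card_compl leq_sub2l // (cut_size es hd cS).
Qed.

Lemma cut_size3 (T : finType) (e : rel T) (X : {set T}) S : symmetric e ->
  (forall p, #|nadj e p| <= 2) -> (forall p, 2 <= #|nadj e p| -> p \in X) ->
  #|X| <= 2 -> vertex_cut e S -> #|~:S| <= 3.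
Proof.
move=> es hd hX cX cS; case: (eqVneq #|~:S| 1) => [->//|n1].
have [A [B [-> /set0Pn [a0 aA] /set0Pn [b0 bB] hAB]]] := cut_split es cS n1.
have cB : #|B| <= 2.
  apply: leq_trans (hd a0); apply: subset_leq_card; apply/subsetP => b bB'.
  by case/andP: (hAB a0 b aA bB').
have cA : #|A| <= 2.
  apply: leq_trans (hd b0); apply: subset_leq_card; apply/subsetP => a aA'.
  by case/andP: (hAB a b0 aA' bB).
case: (leqP #|A| 1) => hA; first by apply: leq_trans (leq_add hA cB) _.
case: (leqP #|B| 1) => hB; first by apply: leq_trans (leq_add cA hB) _.
have AX : A \subset X.
  apply/subsetP => a aA'; apply: hX; apply: leq_trans hB _.
  apply: subset_leq_card; apply/subsetP => b bB'.
  by case/andP: (hAB a b aA' bB').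
have eAX : A = X by apply/eqP; rewrite eqEcard AX (leq_trans cX hA).
have BX : b0 \in X.
  apply: hX; apply: leq_trans hA _.
  apply: subset_leq_card; apply/subsetP => a aA'.
  by case/andP: (hAB a b0 aA' bB).
rewrite -eAX in BX; case/andP: (hAB b0 b0 BX bB).
by rewrite inE eqxx.
Qed.

Lemma kappa_ub (T : finType) (e : rel T) (O : {set T}) x y :
  x != y -> x \in O -> y \in O -> (forall z, z \in O -> ~~ e x z) ->
  kappa e <= #|T| - #|O|.
Proof.
move=> xy xO yO hz; rewrite -(setCK O) -card_compl; apply: kappa_le.
apply/orP; right; apply/existsP; exists x; apply/existsP; exists y.
rewrite !inE !negbK xO yO /=; apply: no_connect => // z.
rewrite /induced_rel !inE !negbK; apply/negP => /and3P [exz _ zO].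
by move: (hz z zO); rewrite exz.
Qed.

Lemma nadj_delete (T : finType) (e : rel T) x y p q :
  q \in nadj (delete_edge e x y) p ->
  q \in nadj e p \/ ((p == x) && (q == y)) || ((p == y) && (q == x)).
Proof.
rewrite !inE /delete_edge negb_and negbK => /andP [-> /orP [h|h]]; by [left|right].
Qed.

Lemma sym_delete (T : finType) (e : rel T) x y : symmetric e -> symmetric (delete_edge e x y).
Proof.
move=> es u v; rewrite /delete_edge es; congr (_ && ~~ _).
by case: (u == x) (u == y) (v == x) (v == y) => [] [] [] [].
Qed.

Section Grp.
Variable gT : finGroupType.
Local Notation e := (@non_inverse_rel gT).

Lemma sym_e : symmetric e.
Proof.
move=> u v; rewrite /non_inverse_rel eq_sym; congr (_ && _).
by rewrite eq_sym eqg_invLR.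
Qed.

Lemma nadj_e p q : q \in nadj e p -> q = (p^-1)%g.
Proof.
by rewrite inE /non_inverse_rel negb_and !negbK eq_sym => /andP [/negbTE -> /= /eqP].
Qed.

Lemma card_nadj_e p : #|nadj e p| <= 1.
Proof.
rewrite -(cards1 (p^-1)%g); apply: subset_leq_card; apply/subsetP => q /nadj_e ->.
by rewrite inE.
Qed.

Lemma e_conn : graph_connected e.
Proof.
move=> u v; case: (eqVneq u v) => [->|uv]; first exact: connect0.
case euv: (e u v); first exact: connect1.
have vi : v = (u^-1)%g by apply: nadj_e; rewrite inE euv eq_sym uv.
have u1 : u != 1%g.
  by apply: contra_neq uv => u1; rewrite vi u1 invg1.
apply: (@connect_trans _ _ 1%g); apply: connect1;
  rewrite /non_inverse_rel.
  by rewrite u1 eq_sym invg_eq1.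
by rewrite vi invg1 invg_eq1 eq_sym invg_eq1 u1.
Qed.


Lemma ee p : e p p = false.
Proof. by rewrite /non_inverse_rel eqxx. Qed.

Lemma e_inv p : e p (p^-1)%g = false.
Proof. by rewrite /non_inverse_rel eqxx andbF. Qed.

Lemma kappa_e_ub (a : gT) : (a^-1)%g != a -> kappa e <= #|gT| - 2.
Proof.
move=> na; have na' : a != (a^-1)%g by rewrite eq_sym.
have c2 : #|[set a; (a^-1)%g]| = 2 by rewrite cards2 na'.
rewrite -{1}c2.
apply: (kappa_ub na'); rewrite ?inE ?eqxx ?orbT //.
by move=> z; rewrite !inE => /orP [] /eqP ->; rewrite ?ee ?e_inv.
Qed.

Lemma kappa_e_lb : #|gT| - 2 <= kappa e.
Proof. exact: (kappa_lb (@sym_e) (@card_nadj_e)). Qed.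

Lemma kappa_del_lb1 (x y : gT) :
  (forall p, #|nadj (delete_edge e x y) p| <= 1) -> #|gT| - 2 <= kappa (delete_edge e x y).
Proof. by move=> h; apply: (kappa_lb (sym_delete x y (@sym_e)) h). Qed.

Lemma n_ge2 (x y : gT) : x != y -> 2 <= #|gT|.
Proof. move=> xy; have <- : #|[set x; y]| = 2 by rewrite cards2 xy.
  apply: max_card. Qed.

Lemma del_xy (x y z w : gT) : ((z == x) && (w == y)) || ((z == y) && (w == x)) ->
  delete_edge e x y z w = false.
Proof. by move=> h; rewrite /delete_edge h andbF. Qed.

Lemma case1 (h : forall x : gT, (x^-1)%g = x) x y : e x y ->
  (kappa (delete_edge e x y)).+1 = kappa e.
Proof.
move=> exy; have xy : x != y by case/andP: exy.
have n2 := n_ge2 xy.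
have k1 : kappa e = #|gT| - 1.
  apply/eqP; rewrite eqn_leq; apply/andP; split.
    rewrite subn1 -(cardsC1 1%g); apply: kappa_le; apply/orP; left.
    by rewrite setCK cards1.
  have := kappa_lb (@sym_e) (d := 0) _; apply => p.
  rewrite leqn0 cards_eq0; apply/eqP; apply/setP => q; rewrite in_set0.
  apply/negP => qn; have := nadj_e qn; rewrite h => qp.
  by move: qn; rewrite qp inE eqxx.
have k2 : kappa (delete_edge e x y) = #|gT| - 2.
  apply/eqP; rewrite eqn_leq; apply/andP; split; last first.
    apply: kappa_del_lb1 => p.
    rewrite -(cards1 (if p == x then y else x)); apply: subset_leq_card.
    apply/subsetP => q qn; rewrite inE; case: (nadj_delete qn).
      move=> qn'; have := nadj_e qn'; rewrite h => qp.
      by move: qn'; rewrite qp inE eqxx.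
    case/orP => /andP [/eqP -> /eqP ->]; first by rewrite eqxx.
    by case: (y =P x) => [->|]; rewrite eqxx.
  have c2 : #|[set x; y]| = 2 by rewrite cards2 xy.
  rewrite -c2; apply: (kappa_ub xy); rewrite ?inE ?eqxx ?orbT //.
  move=> z; rewrite !inE => /orP [] /eqP ->.
    by rewrite /delete_edge ee.
  by rewrite del_xy // !eqxx.
by rewrite k1 k2; move: n2; case: #|gT| => [|[|n]] //; rewrite !subSS subn0.
Qed.


Lemma case2 (h : forall x : gT, x != 1%g -> (x^-1)%g != x) x y : e x y ->
  (kappa (delete_edge e x y)).+1 = kappa e.
Proof.
move=> exy; have /andP [xy yxi] := exy.
have [z [w [z1 zw hzw]]] : exists z w : gT,
    [/\ z != 1%g, ((z == x) && (w == y)) || ((z == y) && (w == x)) & e z w].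
  case: (eqVneq x 1%g) => [x1|x1].
    exists y, x; split; rewrite ?eqxx ?orbT // -?x1 1?eq_sym //.
    by rewrite sym_e.
  by exists x, y; rewrite !eqxx.
have zi : (z^-1)%g != z := h z z1.
have zi' : z != (z^-1)%g by rewrite eq_sym.
have /andP [zw' wzi] := hzw.
have c3 : #|(w |: [set z; (z^-1)%g])| = 3.
  rewrite cardsU1 cards2 zi' !inE negb_or (eq_sym w) zw'.
  by rewrite wzi.
have n3 : 3 <= #|gT| by rewrite -c3 max_card.
have k1 : kappa e = #|gT| - 2.
  by apply/eqP; rewrite eqn_leq kappa_e_lb (kappa_e_ub zi).
have k2 : kappa (delete_edge e x y) = #|gT| - 3.
  apply/eqP; rewrite eqn_leq; apply/andP; split.
    rewrite -c3; apply: (kappa_ub (x := z) (y := w)); rewrite ?inE ?eqxx ?orbT //.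
    move=> u; rewrite !inE => /orP [|/orP []] /eqP ->.
    - by rewrite del_xy.
    - by rewrite /delete_edge ee.
    - by rewrite /delete_edge e_inv.
  apply: kappa_ge; first exact: leq_subr.
  move=> S cS; rewrite card_compl leq_sub2l //.
  have es := sym_delete x y (@sym_e).
  have sub : forall p, nadj (delete_edge e x y) p \subset
      [set (p^-1)%g; if p == x then y else x].
    move=> p; apply/subsetP => q qn; rewrite !inE; case: (nadj_delete qn).
      by move=> /nadj_e ->; rewrite eqxx.
    case/orP => /andP [/eqP -> /eqP ->]; first by rewrite eqxx /= eqxx orbT.
    by case: (y =P x) => [->|_]; rewrite ?eqxx /= ?eqxx ?orbT.
  apply: (cut_size3 (X := [set x; y]) es) => //.
  - move=> p; apply: leq_trans (subset_leq_card (sub p)) _.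
    by rewrite cards2; case: (_ != _).
  - move=> p hp; apply/negPn/negP => px.
    have : nadj (delete_edge e x y) p \subset [set (p^-1)%g].
      apply/subsetP => q qn; rewrite inE; case: (nadj_delete qn).
        by move=> /nadj_e ->.
      by move: px; rewrite !inE; case/norP => /negbTE -> /negbTE ->.
    by move/subset_leq_card; rewrite cards1 => /(leq_trans hp).
  - by rewrite cards2; case: (_ != _).
by rewrite k1 k2; move: n3; case: #|gT| => [|[|[|n]]] //; rewrite !subSS subn0.
Qed.

Lemma mixed (a : gT) : a != 1%g -> (a^-1)%g = a ->
  #|gT| - 2 <= kappa (delete_edge e 1%g a).
Proof.
move=> a1 ai; apply: kappa_del_lb1 => p.
rewrite -(cards1 (if p == 1%g then a else if p == a then 1%g else (p^-1)%g)).
apply: subset_leq_card; apply/subsetP => q qn; rewrite inE.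
have qp : q != p by move: qn; rewrite inE => /andP [].
case: (nadj_delete qn).
  move=> /nadj_e qi; case: (p =P 1%g) => [p1|_].
    by move: qp; rewrite qi p1 invg1 eqxx.
  case: (p =P a) => [pa|_]; last by rewrite qi.
  by move: qp; rewrite qi pa ai eqxx.
case/orP => /andP [/eqP -> /eqP ->]; first by rewrite eqxx.
by rewrite (negbTE a1) eqxx.
Qed.

End Grp.

Theorem mainTheorem10 (gT : finGroupType) :
  minimally_connected (@non_inverse_rel gT) <->
  (forall x : gT, x != 1%g -> (x^-1)%g = x) \/
  (forall x : gT, x != 1%g -> (x^-1)%g != x).
Proof.
split.
  move=> [_ H].
  case: (boolP [forall x : gT, (x != 1%g) ==> ((x^-1)%g == x)]) => [/forallP h|].
    by left => x /(implyP (h x))/eqP.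
  move=> /forallPn [b]; rewrite negb_imply => /andP [b1 nb].
  right => x x1; apply/negP => /eqP xi.
  have e1x : non_inverse_rel 1%g x by rewrite /non_inverse_rel invg1 eq_sym x1.
  have := H _ _ e1x.
  have := mixed x1 xi; have := kappa_e_ub nb.
  have := n_ge2 x1.
  move: (kappa _) (kappa _) => k1 k2.
  case: #|gT| => [|[|n]] //; rewrite !subSS subn0 => _ hk1 hk2 eq.
  by move: hk1; rewrite -eq ltnNge hk2.
case=> h; split; try exact: e_conn.
  apply: case1 => x; case: (eqVneq x 1%g) => [->|]; first by rewrite invg1.
  exact: h.
exact: case2.
Qed.
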